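(* Let $A \subseteq \mathbb{N}$ be a $D$-w.e.u. set and let $a\colon \mathbb{N}\to\mathbb{N}$ be a computable enumeration of $A$ without repetitions (i.e. $a$ is injective with image $A$). Then the deficiency set $\mathcal{D}_a = \{ s \in \mathbb{N} : \exists t > s\, [a(t) < a(s)]\}$ is effectively simple. Consequently every $D$-w.e.u. set is $T$-complete, i.e. $\mathcal{K} \leq_{\mathrm{T}} A$.
   Context: $\varphi_0, \varphi_1, \ldots$ is a standard acceptable enumeration of the partial computable functions $\mathbb{N}\to\mathbb{N}$, $\mathcal{W}_e = \operatorname{dom}\varphi_e$, $\mathcal{K} = \{e : \varphi_e(e)\text{ defined}\}$, $\mathbb{1}_A$ the characteristic function of $A$, $\overline{A}=\mathbb{N}\setminus A$, and $\leq_{\mathrm{T}}$ is Turing reducibility. $\mathfrak{P}_{\mathrm{fin}}(\mathbb{N})$ is the set of finite subsets of $\mathbb{N}$; a map $f\colon \mathbb{N}\to\mathfrak{P}_{\mathrm{fin}}(\mathbb{N})$ is computable if the map sending $e$ to a canonical index of $f(e)$ is computable. A recursively enumerable set $A$ is $D$-w.e.u. if there is a computable $f\colon \mathbb{N}\to\mathfrak{P}_{\mathrm{fin}}(\mathbb{N})$ such that for all $e$: if $\varphi_e(z)$ is defined for every $z\in f(e)$, then there is $z \in f(e)$ with $\varphi_e(z) \neq \mathbb{1}_A(z)$. A recursively enumerable set $D$ is effectively simple if there is a total computable $h\colon\mathbb{N}\to\mathbb{N}$ such that for all $e$: if $\mathcal{W}_e \subseteq \overline{D}$ then $|\mathcal{W}_e|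 \leq h(e)$. *)

(* Defs.v *)
(* A concrete model of (oracle) partial computable functions:
   unary partial recursive functions on nat (with Cantor pairing), given by
   an inductive program syntax, a big-step semantics relative to an oracle,
   and an injective Goedel numbering of programs. *)
From Stdlib Require Import Arith List.
From Stdlib Require Cantor.
Import ListNotations.

Definition pair (x y : nat) : nat := Cantor.to_nat (x, y).
Definition unpair (n : nat) : nat * nat := Cantor.of_nat n.

Inductive prog : Type :=
| PZero : prog
| PSucc : prog
| PProj1 : prog
| PProj2 : prog
| POracle : prog
| PPair : prog -> prog -> prog
| PComp : prog -> prog -> prog
| PPrec : prog -> prog -> prog
| PMu : prog -> prog.

Inductive evalR (o : nat -> bool) : prog -> nat -> nat -> Prop :=
| ev_zero x : evalR o PZero x 0
| ev_succ x : evalR o PSucc x (S x)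
| ev_proj1 x y : evalR o PProj1 (pair x y) x
| ev_proj2 x y : evalR o PProj2 (pair x y) y
| ev_oracle x : evalR o POracle x (if o x then 1 else 0)
| ev_pair f g x u v :
    evalR o f x u -> evalR o g x v -> evalR o (PPair f g) x (pair u v)
| ev_comp f g x u v :
    evalR o g x u -> evalR o f u v -> evalR o (PComp f g) x v
| ev_prec0 f g x y :
    evalR o f x y -> evalR o (PPrec f g) (pair x 0) y
| ev_precS f g x n z y :
    evalR o (PPrec f g) (pair x n) z ->
    evalR o g (pair x (pair n z)) y ->
    evalR o (PPrec f g) (pair x (S n)) y
| ev_mu f x n :
    evalR o f (pair x n) 0 ->
    (forall m, m < n -> exists k, k <> 0 /\ evalR o f (pair x m) k) ->
    evalR o (PMu f) x n.

Fixpoint encode (p : prog) : nat :=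
  match p with
  | PZero => 0
  | PSucc => 1
  | PProj1 => 2
  | PProj2 => 3
  | POracle => 4
  | PPair f g => 5 + 9 * pair (encode f) (encode g)
  | PComp f g => 6 + 9 * pair (encode f) (encode g)
  | PPrec f g => 7 + 9 * pair (encode f) (encode g)
  | PMu f => 8 + 9 * encode f
  end.

(* phiO o e x y : the e-th partial o-computable function maps x to y.
   Indices that code no program denote the nowhere defined function. *)
Definition phiO (o : nat -> bool) (e x y : nat) : Prop :=
  exists p, encode p = e /\ evalR o p x y.

Definition phi (e x y : nat) : Prop := phiO (fun _ => false) e x y.

Definition defined (e x : nat) : Prop := exists y, phi e x y.

Definition W (e : nat) : nat -> Prop := fun x => defined e x.

Definition K : nat -> Prop := fun e => defined e e.

Definition computable (f : nat -> nat) : Prop :=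
  exists e, forall x, phi e x (f x).

Definition re (A : nat -> Prop) : Prop :=
  exists e, forall x, A x <-> W e x.

Definition chi (A : nat -> Prop) (z v : nat) : Prop :=
  (A z /\ v = 1) \/ (~ A z /\ v = 0).

Definition canon (n z : nat) : Prop := Nat.testbit n z = true.

(* D-w.e.u. sets; a computable f : N -> P_fin(N) is given by a computable
   function fc of canonical indices, f(e) = canon (fc e). *)
Definition DWEU (A : nat -> Prop) : Prop :=
  re A /\
  exists fc : nat -> nat, computable fc /\
    forall e, (forall z, canon (fc e) z -> defined e z) ->
      exists z, canon (fc e) z /\ exists y, phi e z y /\ ~ chi A z y.

Definition effectively_simple (D : nat -> Prop) : Prop :=
  re D /\
  exists h : nat -> nat, computable h /\
    forall e, (forall x, W e x -> ~ D x) ->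
      exists l : list nat, length l <= h e /\ forall x, W e x -> In x l.

Definition deficiency (a : nat -> nat) : nat -> Prop :=
  fun s => exists t, s < t /\ a t < a s.

Definition Treducible (B A : nat -> Prop) : Prop :=
  exists oA : nat -> bool, (forall x, oA x = true <-> A x) /\
  exists e, forall x, exists y, phiO oA e x y /\ chi B x y.

(* Main.v *)
Require Import Defs.
From Stdlib Require Import Arith Lia List Bool Classical ClassicalEpsilon.
From Stdlib Require Cantor.
Import ListNotations.


Lemma unpair_pair x y : unpair (pair x y) = (x, y).
Proof. unfold unpair, pair. apply Cantor.cancel_of_to. Qed.

Lemma pair_unpair n : pair (fst (unpair n)) (snd (unpair n)) = n.
Proof. unfold unpair, pair. rewrite <- surjective_pairing. apply Cantor.cancel_to_of. Qed.

Lemma pair_inj x y x' y' : pair x y = pair x' y' -> x = x' /\ y = y'.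
Proof. intro H. apply (f_equal unpair) in H. rewrite !unpair_pair in H. now inversion H. Qed.

Lemma pair_ge x y : x + y <= pair x y.
Proof. unfold pair. pose proof (Cantor.to_nat_non_decreasing x y). lia. Qed.

Lemma fst_pair x y : fst (unpair (pair x y)) = x.
Proof. now rewrite unpair_pair. Qed.
Lemma snd_pair x y : snd (unpair (pair x y)) = y.
Proof. now rewrite unpair_pair. Qed.

Lemma ev_proj1' o x : evalR o PProj1 x (fst (unpair x)).
Proof. rewrite <- (pair_unpair x) at 1. constructor. Qed.
Lemma ev_proj2' o x : evalR o PProj2 x (snd (unpair x)).
Proof. rewrite <- (pair_unpair x) at 1. constructor. Qed.

Ltac sp := repeat (progress (rewrite ?unpair_pair; cbn [fst snd])).

Inductive fexp : Type :=
| EZero | ESucc | EFst | ESnd | EOrc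
| EPair (a b : fexp) | EComp (a b : fexp) | EPrec (a b : fexp).

Fixpoint compile (e : fexp) : prog :=
  match e with
  | EZero => PZero | ESucc => PSucc | EFst => PProj1 | ESnd => PProj2 | EOrc => POracle
  | EPair a b => PPair (compile a) (compile b)
  | EComp a b => PComp (compile a) (compile b)
  | EPrec a b => PPrec (compile a) (compile b)
  end.

Definition precf (fa fb : nat -> nat) (x0 n : nat) : nat :=
  nat_rect (fun _ => nat) (fa x0) (fun i z => fb (pair x0 (pair i z))) n.

Fixpoint den (o : nat -> bool) (e : fexp) (x : nat) : nat :=
  match e with
  | EZero => 0 | ESucc => S x | EFst => fst (unpair x) | ESnd => snd (unpair x)
  | EOrc => if o x then 1 else 0
  | EPair a b => pair (den o a x) (den o b x)
  | EComp a b => den o a (den o b x)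
  | EPrec a b => precf (den o a) (den o b) (fst (unpair x)) (snd (unpair x))
  end.

Lemma compile_correct o e x : evalR o (compile e) x (den o e x).
Proof.
  revert x; induction e; intro x; simpl.
  - constructor.
  - constructor.
  - apply ev_proj1'.
  - apply ev_proj2'.
  - constructor.
  - constructor; auto.
  - econstructor; eauto.
  - rewrite <- (pair_unpair x) at 1.
    generalize (fst (unpair x)) (snd (unpair x)). intros x0 n.
    induction n; simpl.
    + constructor; auto.
    + econstructor; eauto.
Qed.

Fixpoint noorc (e : fexp) : bool :=
  match e with
  | EOrc => false
  | EPair a b | EComp a b | EPrec a b => noorc a && noorc b
  | _ => true
  end.

Lemma den_noorc o o' e : noorc e = true -> forall x, den o e x = den o' e x.
Proof.
  induction e; simpl; intros H x; try reflexivity; try discriminate;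
  apply andb_prop in H; destruct H as [H1 H2].
  - now rewrite IHe1, IHe2.
  - now rewrite IHe1, IHe2.
  - unfold precf. generalize (snd (unpair x)); intro n. induction n; simpl.
    + auto.
    + rewrite IHn. auto.
Qed.

Definition EId := EPair EFst ESnd.
Lemma den_Id o x : den o EId x = x.
Proof. apply pair_unpair. Qed.

Fixpoint EK (n : nat) : fexp := match n with 0 => EZero | S n => EComp ESucc (EK n) end.
Lemma den_K o n x : den o (EK n) x = n.
Proof. induction n; simpl; auto. Qed.

Definition EIfZ c a b := EComp (EPrec EFst (EComp ESnd EFst)) (EPair (EPair a b) c).
Lemma den_IfZ o c a b x : den o (EIfZ c a b) x =
  match den o c x with 0 => den o a x | S _ => den o b x end.
Proof.
  simpl. rewrite !unpair_pair. simpl. unfold precf.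
  destruct (den o c x); simpl; rewrite ?unpair_pair; simpl; rewrite ?unpair_pair; reflexivity.
Qed.

Definition EPred := EComp (EPrec EZero (EComp EFst ESnd)) (EPair EZero EId).
Lemma den_Pred o x : den o EPred x = pred x.
Proof.
  unfold EPred; cbn [den]. rewrite den_Id, unpair_pair. simpl. unfold precf.
  destruct x; cbn [nat_rect]; rewrite ?unpair_pair; cbn [fst snd]; rewrite ?unpair_pair; reflexivity.
Qed.

Definition ESub a b := EComp (EPrec EId (EComp EPred (EComp ESnd ESnd))) (EPair a b).
Lemma den_Sub o a b x : den o (ESub a b) x = den o a x - den o b x.
Proof.
  unfold ESub; cbn [den]. rewrite unpair_pair. cbn [fst snd]. unfold precf.
  generalize (den o a x) (den o b x). intros u v. induction v; cbn [nat_rect].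
  - rewrite den_Id. lia.
  - cbn [den]. rewrite den_Pred. sp. rewrite IHv. lia.
Qed.

Definition EAdd a b := EComp (EPrec EId (EComp ESucc (EComp ESnd ESnd))) (EPair a b).
Lemma den_Add o a b x : den o (EAdd a b) x = den o a x + den o b x.
Proof.
  unfold EAdd; cbn [den]. rewrite unpair_pair. cbn [fst snd]. unfold precf.
  generalize (den o a x) (den o b x). intros u v. induction v; cbn [nat_rect].
  - rewrite den_Id. lia.
  - cbn [den]. sp. rewrite IHv. lia.
Qed.

Definition EIfEq u v a b := EIfZ (EAdd (ESub u v) (ESub v u)) a b.
Lemma den_IfEq o u v a b x : den o (EIfEq u v a b) x =
  if den o u x =? den o v x then den o a x else den o b x.
Proof.
  unfold EIfEq. rewrite den_IfZ, den_Add, !den_Sub.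
  destruct (Nat.eqb_spec (den o u x) (den o v x)).
  - replace (den o u x - den o v x + (den o v x - den o u x)) with 0 by lia. auto.
  - destruct (den o u x - den o v x + (den o v x - den o u x)) eqn:E; [lia|auto].
Qed.

Definition EIfLe u v a b := EIfZ (ESub u v) a b.
Lemma den_IfLe o u v a b x : den o (EIfLe u v a b) x =
  if den o u x <=? den o v x then den o a x else den o b x.
Proof.
  unfold EIfLe. rewrite den_IfZ, den_Sub.
  destruct (Nat.leb_spec (den o u x) (den o v x)).
  - replace (den o u x - den o v x) with 0 by lia. auto.
  - destruct (den o u x - den o v x) eqn:E; [lia|auto].
Qed.


Definition Z3 := EComp ESnd ESnd.
Definition I3 := EComp EFst ESnd.
Lemma den_Z3 o x i z : den o Z3 (pair x (pair i z)) = z.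
Proof. unfold Z3. cbn [den]. sp. reflexivity. Qed.
Lemma den_I3 o x i z : den o I3 (pair x (pair i z)) = i.
Proof. unfold I3. cbn [den]. sp. reflexivity. Qed.

Lemma divmod_S k n : k <> 0 ->
  S n / k = (if S (n mod k) =? k then S (n / k) else n / k) /\
  S n mod k = (if S (n mod k) =? k then 0 else S (n mod k)).
Proof.
  intro Hk. pose proof (Nat.div_mod n k Hk). pose proof (Nat.mod_upper_bound n k Hk).
  destruct (Nat.eqb_spec (S (n mod k)) k).
  - split.
    + symmetry. apply (Nat.div_unique _ _ _ 0); lia.
    + symmetry. apply (Nat.mod_unique _ _ (S (n/k))); lia.
  - split.
    + symmetry. apply (Nat.div_unique _ _ _ (S (n mod k))); lia.
    + symmetry. apply (Nat.mod_unique _ _ (n/k)); lia.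
Qed.

Definition EDM (k : nat) : fexp :=
  EComp (EPrec (EPair EZero EZero)
     (EIfEq (EComp ESucc (EComp ESnd Z3)) (EK k)
        (EPair (EComp ESucc (EComp EFst Z3)) EZero)
        (EPair (EComp EFst Z3) (EComp ESucc (EComp ESnd Z3)))))
   (EPair EZero EId).

Lemma den_DM o k x : k <> 0 -> den o (EDM k) x = pair (x / k) (x mod k).
Proof.
  intro Hk. unfold EDM. cbn [den]. rewrite den_Id. sp. unfold precf.
  induction x; cbn [nat_rect].
  - cbn [den]. rewrite Nat.Div0.div_0_l, Nat.Div0.mod_0_l by auto. reflexivity.
  - rewrite den_IfEq. cbn [den]. rewrite den_K, !den_Z3, IHx. sp.
    destruct (divmod_S k x Hk) as [H1 H2]. rewrite H1, H2.
    destruct (S (x mod k) =? k); reflexivity.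
Qed.

Fixpoint EMulK (k : nat) (a : fexp) : fexp :=
  match k with 0 => EZero | S k => EAdd a (EMulK k a) end.
Lemma den_MulK o k a x : den o (EMulK k a) x = k * den o a x.
Proof. induction k; simpl EMulK; [reflexivity|]. rewrite den_Add, IHk. lia. Qed.

Definition EHalfIt := EPrec EId (EComp EFst (EComp (EDM 2) Z3)).
Lemma den_HalfIt o n z : den o EHalfIt (pair n z) = n / 2 ^ z.
Proof.
  unfold EHalfIt. cbn [den]. sp. unfold precf. induction z; cbn [nat_rect].
  - rewrite den_Id. simpl. symmetry. apply Nat.div_1_r.
  - cbn [den]. rewrite den_Z3, den_DM by lia. sp. rewrite IHz.
    rewrite Nat.div_div by (try apply Nat.pow_nonzero; lia). f_equal. simpl. lia.
Qed.

Definition EBit := EComp ESnd (EComp (EDM 2) EHalfIt).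
Lemma den_Bit o n z : den o EBit (pair n z) = if Nat.testbit n z then 1 else 0.
Proof.
  unfold EBit. cbn [den]. rewrite den_HalfIt, den_DM by lia. sp.
  pose proof (Nat.testbit_spec' n z). destruct (Nat.testbit n z); simpl in *; lia.
Qed.

Fixpoint sumto (f : nat -> nat) (n : nat) : nat :=
  match n with 0 => 0 | S n => sumto f n + f n end.

Definition ESum (P : fexp) : fexp :=
  EPrec EZero (EAdd Z3 (EComp P (EPair EFst I3))).
Lemma den_Sum o P x n : den o (ESum P) (pair x n) = sumto (fun i => den o P (pair x i)) n.
Proof.
  unfold ESum. cbn [den]. sp. unfold precf. induction n; cbn [nat_rect].
  - reflexivity.
  - rewrite den_Add. cbn [den]. rewrite den_Z3, den_I3. sp. rewrite IHn. reflexivity.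
Qed.

Lemma sumto_zero f n : sumto f n = 0 <-> forall i, i < n -> f i = 0.
Proof.
  induction n; simpl; split; intros; try lia.
  - assert (i < n \/ i = n) as [|] by lia.
    + apply IHn; auto; lia.
    + subst; lia.
  - rewrite (proj2 IHn); [|intros; apply H; lia]. rewrite H; lia.
Qed.


Definition kcons fr K := S (pair fr K).
Definition fr_pair1 b x := pair 0 (pair b x).
Definition fr_pair2 u := pair 1 u.
Definition fr_comp a := pair 2 a.
Definition fr_prec fa g x0 i n := pair 3 (pair fa (pair g (pair x0 (pair i n)))).
Definition fr_mu f x m := pair 4 (pair f (pair x m)).
Definition st_eval c x K := pair (pair 0 (pair c x)) K.
Definition st_ret v K := pair (pair 1 v) K.

Notation "f @ g" := (EComp f g) (at level 40, left associativity).

Definition MRET v K := EPair (EPair (EK 1) v) K.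
Definition MEVAL c x K := EPair (EPair (EK 0) (EPair c x)) K.
Definition MCONS fr K := ESucc @ EPair fr K.

Definition EVALBR : fexp :=
  let c := EFst @ ESnd @ EFst in
  let x := ESnd @ ESnd @ EFst in
  let K := ESnd in
  let r := ESnd @ EDM 9 @ c in
  let k := EFst @ EDM 9 @ c in
  let p := EFst @ k in
  let q := ESnd @ k in
  EIfLe c (EK 4)
    (EIfEq c (EK 0) (MRET (EK 0) K)
    (EIfEq c (EK 1) (MRET (ESucc @ x) K)
    (EIfEq c (EK 2) (MRET (EFst @ x) K)
    (EIfEq c (EK 3) (MRET (ESnd @ x) K)
    (MRET (EK 0) K)))))
    (EIfEq r (EK 5) (MEVAL p x (MCONS (EPair (EK 0) (EPair q x)) K))
    (EIfEq r (EK 6) (MEVAL q x (MCONS (EPair (EK 2) p) K))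
    (EIfEq r (EK 7) (MEVAL p (EFst @ x)
        (MCONS (EPair (EK 3) (EPair p (EPair q (EPair (EFst @ x) (EPair (EK 0) (ESnd @ x)))))) K))
    (EIfEq r (EK 8) (MEVAL k (EPair x (EK 0))
        (MCONS (EPair (EK 4) (EPair k (EPair x (EK 0)))) K))
    EId)))).

Definition RETBR : fexp :=
  let v := ESnd @ EFst in
  let K := ESnd in
  let w := EPred @ K in
  let fr := EFst @ w in
  let K' := ESnd @ w in
  let ft := EFst @ fr in
  let d := ESnd @ fr in
  EIfEq K (EK 0) EId
   (EIfEq ft (EK 0) (MEVAL (EFst @ d) (ESnd @ d) (MCONS (EPair (EK 1) v) K'))
   (EIfEq ft (EK 1) (MRET (EPair d v) K')
   (EIfEq ft (EK 2) (MEVAL d v K')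
   (EIfEq ft (EK 3)
      (let fa := EFst @ d in let g := EFst @ ESnd @ d in
       let x0 := EFst @ ESnd @ ESnd @ d in let i := EFst @ ESnd @ ESnd @ ESnd @ d in
       let n := ESnd @ ESnd @ ESnd @ ESnd @ d in
       EIfEq i n (MRET v K')
         (MEVAL g (EPair x0 (EPair i v))
            (MCONS (EPair (EK 3) (EPair fa (EPair g (EPair x0 (EPair (ESucc @ i) n))))) K')))
   (EIfEq ft (EK 4)
      (let f := EFst @ d in let xx := EFst @ ESnd @ d in let m := ESnd @ ESnd @ d in
       EIfEq v (EK 0) (MRET m K')
         (MEVAL f (EPair xx (ESucc @ m))
            (MCONS (EPair (EK 4) (EPair f (EPair xx (ESucc @ m)))) K')))
   EId))))).

Definition STEP : fexp := EIfEq (EFst @ EFst) (EK 0) EVALBR (RETBR @ EPair (EPair (EK 1) (ESnd @ EFst)) ESnd).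

Definition stepf (s : nat) : nat := den (fun _ => false) STEP s.

Lemma divmod9 r k : r < 9 -> (r + 9 * k) / 9 = k /\ (r + 9 * k) mod 9 = r.
Proof.
  intro H. split.
  - symmetry. apply (Nat.div_unique _ _ _ r); lia.
  - symmetry. apply (Nat.mod_unique _ _ k); lia.
Qed.

Ltac dec := repeat match goal with
  | |- context [?u =? ?v] => destruct (Nat.eqb_spec u v); try (exfalso; lia)
  | |- context [?u <=? ?v] => destruct (Nat.leb_spec u v); try (exfalso; lia)
  end.

Ltac mstep := unfold stepf, STEP, EVALBR, RETBR, MRET, MEVAL, MCONS,
   st_eval, st_ret, kcons, fr_pair1, fr_pair2, fr_comp, fr_prec, fr_mu;
  repeat (progress (cbn [den Nat.pred]; rewrite ?den_IfEq, ?den_IfLe, ?den_K, ?den_Id, ?den_Pred; try rewrite den_DM by lia; try (match goal with Hd: _ / 9 = _ |- _ => rewrite Hd end); try (match goal with Hm: _ mod 9 = _ |- _ => rewrite Hm end); sp));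
  repeat (dec; cbn [den Nat.pred]; rewrite ?den_IfEq, ?den_IfLe, ?den_K, ?den_Id, ?den_Pred; try rewrite den_DM by lia; try (match goal with Hd: _ / 9 = _ |- _ => rewrite Hd end); try (match goal with Hm: _ mod 9 = _ |- _ => rewrite Hm end); sp); try reflexivity.

Lemma st_zero x K : stepf (st_eval 0 x K) = st_ret 0 K.
Proof. mstep. Qed.
Lemma st_one x K : stepf (st_eval 1 x K) = st_ret (S x) K.
Proof. mstep. Qed.
Lemma st_two x K : stepf (st_eval 2 x K) = st_ret (fst (unpair x)) K.
Proof. mstep. Qed.
Lemma st_three x K : stepf (st_eval 3 x K) = st_ret (snd (unpair x)) K.
Proof. mstep. Qed.
Lemma st_four x K : stepf (st_eval 4 x K) = st_ret 0 K.
Proof. mstep. Qed.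
Lemma st_pairc p q x K : stepf (st_eval (5 + 9 * pair p q) x K) = st_eval p x (kcons (fr_pair1 q x) K).
Proof. destruct (divmod9 5 (pair p q)) as [Hd Hm]; [lia|]. mstep. Qed.
Lemma st_compc p q x K : stepf (st_eval (6 + 9 * pair p q) x K) = st_eval q x (kcons (fr_comp p) K).
Proof. destruct (divmod9 6 (pair p q)) as [Hd Hm]; [lia|]. mstep. Qed.
Lemma st_precc p q x K : stepf (st_eval (7 + 9 * pair p q) x K) =
  st_eval p (fst (unpair x)) (kcons (fr_prec p q (fst (unpair x)) 0 (snd (unpair x))) K).
Proof. destruct (divmod9 7 (pair p q)) as [Hd Hm]; [lia|]. mstep. Qed.
Lemma st_muc f x K : stepf (st_eval (8 + 9 * f) x K) = st_eval f (pair x 0) (kcons (fr_mu f x 0) K).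
Proof. destruct (divmod9 8 f) as [Hd Hm]; [lia|]. mstep. Qed.
Lemma st_stuck c x K : 4 < c -> c mod 9 < 5 -> stepf (st_eval c x K) = st_eval c x K.
Proof. intros H1 H2. mstep. Qed.
Lemma st_halt v : stepf (st_ret v 0) = st_ret v 0.
Proof. mstep. Qed.
Lemma st_tag t v K : t <> 0 -> stepf (pair (pair t v) K) = stepf (st_ret v K).
Proof. intros Ht. unfold stepf, STEP, st_ret. rewrite !den_IfEq. cbn [den]. rewrite !den_K. sp.
  dec. reflexivity. Qed.
Lemma st_rpair1 b x v K : stepf (st_ret v (kcons (fr_pair1 b x) K)) = st_eval b x (kcons (fr_pair2 v) K).
Proof. mstep. Qed.
Lemma st_rpair2 u v K : stepf (st_ret v (kcons (fr_pair2 u) K)) = st_ret (pair u v) K.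
Proof. mstep. Qed.
Lemma st_rcomp a v K : stepf (st_ret v (kcons (fr_comp a) K)) = st_eval a v K.
Proof. mstep. Qed.
Lemma st_rprec_end fa g x0 n v K : stepf (st_ret v (kcons (fr_prec fa g x0 n n) K)) = st_ret v K.
Proof. mstep. Qed.
Lemma st_rprec fa g x0 i n v K : i <> n -> stepf (st_ret v (kcons (fr_prec fa g x0 i n) K)) =
  st_eval g (pair x0 (pair i v)) (kcons (fr_prec fa g x0 (S i) n) K).
Proof. intro H. mstep. Qed.
Lemma st_rmu0 f x m K : stepf (st_ret 0 (kcons (fr_mu f x m) K)) = st_ret m K.
Proof. mstep. Qed.
Lemma st_rmu f x m v K : v <> 0 -> stepf (st_ret v (kcons (fr_mu f x m) K)) =
  st_eval f (pair x (S m)) (kcons (fr_mu f x (S m)) K).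
Proof. intro H. mstep. Qed.
Lemma st_rbad t d v K : 4 < t -> stepf (st_ret v (kcons (pair t d) K)) = st_ret v (kcons (pair t d) K).
Proof. intro H. mstep. Qed.




Lemma pair_surj n : exists a b, n = pair a b.
Proof. exists (fst (unpair n)), (snd (unpair n)). symmetry. apply pair_unpair. Qed.

Lemma encode_inj p q : encode p = encode q -> p = q.
Proof.
  revert q; induction p; destruct q; simpl; intro H; try lia; try reflexivity;
  try (assert (E: pair (encode p1) (encode p2) = pair (encode q1) (encode q2)) by lia;
       apply pair_inj in E; destruct E as [E1 E2]; f_equal; auto).
  f_equal. apply IHp. lia.
Qed.

Lemma phiO_enc o p x y : phiO o (encode p) x y <-> evalR o p x y.
Proof.
  split.
  - intros [q [Hq H]]. apply encode_inj in Hq. now subst.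
  - intro H. exists p. auto.
Qed.

Definition valid (c : nat) : Prop := exists p, encode p = c.

Lemma phi_valid c x y : phi c x y -> valid c.
Proof. intros [p [Hp _]]. exists p; auto. Qed.

Definition o0 : nat -> bool := fun _ => false.

Lemma phi0 x : phi 0 x 0.
Proof. exists PZero. split; [reflexivity|constructor]. Qed.
Lemma phi1 x : phi 1 x (S x).
Proof. exists PSucc. split; [reflexivity|constructor]. Qed.
Lemma phi2 x : phi 2 x (fst (unpair x)).
Proof. exists PProj1. split; [reflexivity|apply ev_proj1']. Qed.
Lemma phi3 x : phi 3 x (snd (unpair x)).
Proof. exists PProj2. split; [reflexivity|apply ev_proj2']. Qed.
Lemma phi4 x : phi 4 x 0.
Proof. exists POracle. split; [reflexivity|]. exact (ev_oracle _ x). Qed.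

Lemma phi_pairI p q x u v : phi p x u -> phi q x v -> phi (5 + 9 * pair p q) x (pair u v).
Proof.
  intros [P [<- HP]] [Q [<- HQ]]. exists (PPair P Q). split; [reflexivity|]. constructor; auto.
Qed.
Lemma phi_compI p q x u w : phi q x u -> phi p u w -> phi (6 + 9 * pair p q) x w.
Proof.
  intros [Q [<- HQ]] [P [<- HP]]. exists (PComp P Q). split; [reflexivity|]. econstructor; eauto.
Qed.
Lemma phi_prec0I fa g x0 y : valid g -> phi fa x0 y -> phi (7 + 9 * pair fa g) (pair x0 0) y.
Proof.
  intros [G <-] [F [<- HF]]. exists (PPrec F G). split; [reflexivity|]. constructor; auto.
Qed.

Lemma valid_dec c : valid c <->
  c <= 4 \/ (exists p q, (c = 5 + 9 * pair p q \/ c = 6 + 9 * pair p q \/ c = 7 + 9 * pair p q) /\ valid p /\ valid q)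
  \/ (exists f, c = 8 + 9 * f /\ valid f).
Proof.
  split.
  - intros [P <-]. destruct P; simpl; try (left; lia); right.
    + left. exists (encode P1), (encode P2). split; [left; reflexivity|split; eexists; eauto].
    + left. exists (encode P1), (encode P2). split; [right; left; reflexivity|split; eexists; eauto].
    + left. exists (encode P1), (encode P2). split; [right; right; reflexivity|split; eexists; eauto].
    + right. exists (encode P). split; [reflexivity|eexists; eauto].
  - intros [H|[H0|H0]]; [| destruct H0 as (p & q & H & (P & <-) & (Q & <-)) | destruct H0 as (f & -> & F & <-)].
    + destruct c as [|[|[|[|[|]]]]]; try lia.
      * exists PZero; auto. * exists PSucc; auto. * exists PProj1; auto.
      * exists PProj2; auto. * exists POracle; auto.
    + destruct H as [ -> | [ -> | -> ] ].
      * exists (PPair P Q); auto. * exists (PComp P Q); auto. * exists (PPrec P Q); auto.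
    + exists (PMu F); auto.
Qed.

Lemma valid_sub r p q : 5 <= r <= 7 -> valid (r + 9 * pair p q) -> valid p /\ valid q.
Proof.
  intros Hr [P HP]. destruct P; simpl in HP; try lia;
  (assert (E: pair (encode P1) (encode P2) = pair p q) by lia;
   apply pair_inj in E; destruct E as [<- <-]; split; eexists; eauto).
Qed.
Lemma valid_sub8 f : valid (8 + 9 * f) -> valid f.
Proof.
  intros [P HP]. destruct P; simpl in HP; try lia. exists P. lia.
Qed.

Lemma phi_precSI fa g x0 n z y : phi (7 + 9 * pair fa g) (pair x0 n) z ->
  phi g (pair x0 (pair n z)) y -> phi (7 + 9 * pair fa g) (pair x0 (S n)) y.
Proof.
  intros [P [HP H1]] [G [<- HG]]. destruct P; simpl in HP; try lia.
  assert (E: pair (encode P1) (encode P2) = pair fa (encode G)) by lia.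
  apply pair_inj in E. destruct E as [E1 E2]. apply encode_inj in E2. subst.
  exists (PPrec P1 G). split; [reflexivity|]. econstructor; eauto.
Qed.

Lemma phi_muI f x n : phi f (pair x n) 0 -> (forall m, m < n -> exists k, k <> 0 /\ phi f (pair x m) k) ->
  phi (8 + 9 * f) x n.
Proof.
  intros [F [<- HF]] H. exists (PMu F). split; [reflexivity|]. constructor; auto.
  intros m Hm. destruct (H m Hm) as [k [Hk [F' [HF' Hk']]]]. apply encode_inj in HF'. subst.
  eauto.
Qed.

Inductive kret : nat -> nat -> nat -> Prop :=
| kr_nil v : kret 0 v v
| kr_p1 b x K u r : (valid b -> exists v, phi b x v /\ kret K (pair u v) r) -> kret (kcons (fr_pair1 b x) K) u r
| kr_p2 u K v r : kret K (pair u v) r -> kret (kcons (fr_pair2 u) K) v r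
| kr_comp a K v r : (valid a -> exists w, phi a v w /\ kret K w r) -> kret (kcons (fr_comp a) K) v r
| kr_prec fa g x0 i n K v r :
    (phi (7 + 9 * pair fa g) (pair x0 i) v -> exists y, phi (7 + 9 * pair fa g) (pair x0 n) y /\ kret K y r) ->
    kret (kcons (fr_prec fa g x0 i n) K) v r
| kr_mu f x m K v r :
    ((forall m', m' < m -> exists k, k <> 0 /\ phi f (pair x m') k) -> phi f (pair x m) v ->
       exists y, phi (8 + 9 * f) x y /\ kret K y r) ->
    kret (kcons (fr_mu f x m) K) v r.

Ltac pinj := repeat match goal with
  | H : S _ = S _ |- _ => injection H as H
  | H : pair _ _ = pair _ _ |- _ => apply pair_inj in H; destruct H
  end; subst; try discriminate.

Ltac kinv H := inversion H; subst; unfold kcons, fr_pair1, fr_pair2, fr_comp, fr_prec, fr_mu in *;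
  try discriminate; pinj; auto.

Lemma kret_nil_inv v r : kret 0 v r -> v = r.
Proof. intro H. kinv H. Qed.
Lemma kret_p1_inv b x K u r : kret (kcons (fr_pair1 b x) K) u r -> valid b -> exists v, phi b x v /\ kret K (pair u v) r.
Proof. intro H. kinv H. Qed.
Lemma kret_comp_inv a K v r : kret (kcons (fr_comp a) K) v r -> valid a -> exists w, phi a v w /\ kret K w r.
Proof. intro H. kinv H. Qed.
Lemma kret_prec_inv fa g x0 i n K v r : kret (kcons (fr_prec fa g x0 i n) K) v r ->
  phi (7 + 9 * pair fa g) (pair x0 i) v -> exists y, phi (7 + 9 * pair fa g) (pair x0 n) y /\ kret K y r.
Proof. intro H. kinv H. Qed.
Lemma kret_mu_inv f x m K v r : kret (kcons (fr_mu f x m) K) v r ->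
  (forall m', m' < m -> exists k, k <> 0 /\ phi f (pair x m') k) -> phi f (pair x m) v ->
       exists y, phi (8 + 9 * f) x y /\ kret K y r.
Proof. intro H. kinv H. Qed.
Lemma kret_p2_inv u K v r : kret (kcons (fr_pair2 u) K) v r -> kret K (pair u v) r.
Proof. intro H. kinv H. Qed.


Definition sem (s r : nat) : Prop :=
  let m := fst (unpair s) in let K := snd (unpair s) in
  let t := fst (unpair m) in let pay := snd (unpair m) in
  if t =? 0 then (valid (fst (unpair pay)) -> exists y, phi (fst (unpair pay)) (snd (unpair pay)) y /\ kret K y r)
  else kret K pay r.

Lemma sem_eval c x K r : sem (st_eval c x K) r <-> (valid c -> exists y, phi c x y /\ kret K y r).
Proof. unfold sem, st_eval. sp. rewrite Nat.eqb_refl. tauto. Qed.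
Lemma sem_ret v K r : sem (st_ret v K) r <-> kret K v r.
Proof. unfold sem, st_ret. sp. change (1 =? 0) with false. tauto. Qed.
Lemma sem_tag t v K r : t <> 0 -> (sem (pair (pair t v) K) r <-> kret K v r).
Proof. intro H. unfold sem. sp. destruct (Nat.eqb_spec t 0); [lia|tauto]. Qed.

Lemma back_ret v K r : sem (stepf (st_ret v K)) r -> kret K v r.
Proof.
  intro H. destruct K as [|w].
  - rewrite st_halt, sem_ret in H. exact H.
  - destruct (pair_surj w) as [fr [K' ->]]. destruct (pair_surj fr) as [ft [d ->]].
    change (S (pair (pair ft d) K')) with (kcons (pair ft d) K') in *.
    destruct ft as [|[|[|[|[|ft]]]]].
    + destruct (pair_surj d) as [b [x ->]]. change (pair 0 (pair b x)) with (fr_pair1 b x) in *.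
      rewrite st_rpair1, sem_eval in H. constructor. intro Hb. destruct (H Hb) as [w [H1 H2]].
      exists w. split; auto. apply kret_p2_inv; auto.
    + change (pair 1 d) with (fr_pair2 d) in *. rewrite st_rpair2, sem_ret in H. constructor; auto.
    + change (pair 2 d) with (fr_comp d) in *. rewrite st_rcomp, sem_eval in H. constructor; auto.
    + destruct (pair_surj d) as [fa [d1 ->]]. destruct (pair_surj d1) as [g [d2 ->]].
      destruct (pair_surj d2) as [x0 [d3 ->]]. destruct (pair_surj d3) as [i [n ->]].
      change (pair 3 (pair fa (pair g (pair x0 (pair i n))))) with (fr_prec fa g x0 i n) in *.
      destruct (Nat.eq_dec i n) as [->|Hin].
      * rewrite st_rprec_end, sem_ret in H. constructor. intro. exists v. auto.
      * rewrite (st_rprec fa g x0 i n v K' Hin), sem_eval in H. constructor. intro Hp.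
        assert (Hg : valid g) by (apply (valid_sub 7 fa g); [lia|]; eapply phi_valid; eauto).
        destruct (H Hg) as [z [H1 H2]]. eapply kret_prec_inv; eauto. eapply phi_precSI; eauto.
    + destruct (pair_surj d) as [f [d1 ->]]. destruct (pair_surj d1) as [x [m ->]].
      change (pair 4 (pair f (pair x m))) with (fr_mu f x m) in *.
      destruct (Nat.eq_dec v 0) as [->|Hv].
      * rewrite st_rmu0, sem_ret in H. constructor. intros H1 H2. exists m. split; auto.
        apply phi_muI; auto.
      * rewrite (st_rmu f x m v K' Hv), sem_eval in H. constructor. intros H1 H2.
        destruct H as [v' [H3 H4]]. { eapply phi_valid; eauto. }
        eapply kret_mu_inv; eauto. intros m' Hm'.
        assert (m' < m \/ m' = m) as [|] by lia; auto. subst. exists v. auto.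
    + rewrite (st_rbad (S (S (S (S (S ft))))) d v K') in H by lia. rewrite sem_ret in H. exact H.
Qed.

Lemma back_eval c x K r : sem (stepf (st_eval c x K)) r -> sem (st_eval c x K) r.
Proof.
  intro H. rewrite sem_eval. intro Hc.
  destruct (le_lt_dec c 4) as [Hc4|Hc4].
  - destruct c as [|[|[|[|[|c]]]]]; try lia.
    + rewrite st_zero, sem_ret in H. eauto using phi0.
    + rewrite st_one, sem_ret in H. eauto using phi1.
    + rewrite st_two, sem_ret in H. eauto using phi2.
    + rewrite st_three, sem_ret in H. eauto using phi3.
    + rewrite st_four, sem_ret in H. eauto using phi4.
  - assert (Hc9 : c = c mod 9 + 9 * (c / 9)) by (pose proof (Nat.div_mod c 9); lia).
    assert (Hr : c mod 9 < 9) by (apply Nat.mod_upper_bound; lia).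
    destruct (lt_dec (c mod 9) 5) as [Hs|Hs].
    { rewrite st_stuck in H by lia. rewrite sem_eval in H. auto. }
    destruct (pair_surj (c / 9)) as [p [q Hpq]].
    assert (c mod 9 = 5 \/ c mod 9 = 6 \/ c mod 9 = 7 \/ c mod 9 = 8) as [E|[E|[E|E]]] by lia;
      rewrite E in Hc9; clear Hs Hr E.
    + rewrite Hpq in Hc9. subst c. destruct (valid_sub 5 p q) as [Hp Hq]; [lia|exact Hc|].
      rewrite st_pairc, sem_eval in H. destruct (H Hp) as [u [H1 H2]].
      destruct (kret_p1_inv _ _ _ _ _ H2 Hq) as [v [H3 H4]]. eauto using phi_pairI.
    + rewrite Hpq in Hc9. subst c. destruct (valid_sub 6 p q) as [Hp Hq]; [lia|exact Hc|].
      rewrite st_compc, sem_eval in H. destruct (H Hq) as [u [H1 H2]].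
      destruct (kret_comp_inv _ _ _ _ H2 Hp) as [w [H3 H4]]. eauto using phi_compI.
    + rewrite Hpq in Hc9. subst c. destruct (valid_sub 7 p q) as [Hp Hq]; [lia|exact Hc|].
      rewrite st_precc, sem_eval in H. destruct (H Hp) as [y0 [H1 H2]].
      destruct (kret_prec_inv _ _ _ _ _ _ _ _ H2) as [y [H3 H4]].
      { apply phi_prec0I; auto. }
      rewrite pair_unpair in H3. eauto.
    + remember (c / 9) as f. rewrite Hc9 in Hc, H |- *. assert (Hf : valid f) by (apply valid_sub8; exact Hc).
      rewrite st_muc, sem_eval in H. destruct (H Hf) as [v [H1 H2]].
      eapply kret_mu_inv; eauto. intros; lia.
Qed.

Lemma back s r : sem (stepf s) r -> sem s r.
Proof.
  destruct (pair_surj s) as [m [K ->]]. destruct (pair_surj m) as [t [pay ->]].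
  destruct (Nat.eq_dec t 0) as [->|Ht].
  - destruct (pair_surj pay) as [c [x ->]]. apply back_eval.
  - rewrite st_tag, sem_tag by auto. apply back_ret.
Qed.

Fixpoint run (n s : nat) : nat := match n with 0 => s | S n => run n (stepf s) end.

Lemma run_S n s : run (S n) s = stepf (run n s).
Proof. revert s; induction n; intro s; simpl; auto. rewrite <- IHn. reflexivity. Qed.

Lemma run_add n m s : run (n + m) s = run m (run n s).
Proof. revert s; induction n; intro s; simpl; auto. Qed.

Lemma run_halt n v : run n (st_ret v 0) = st_ret v 0.
Proof. induction n; simpl; auto. rewrite st_halt. auto. Qed.

Lemma sound_run n s y : run n s = st_ret y 0 -> sem s y.
Proof.
  revert s; induction n; intros s H; simpl in H.
  - subst. apply sem_ret. constructor.
  - apply back. auto.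
Qed.

Lemma soundness c x y n : valid c -> run n (st_eval c x 0) = st_ret y 0 -> phi c x y.
Proof.
  intros Hc H. apply sound_run in H. rewrite sem_eval in H. destruct (H Hc) as [y' [H1 H2]].
  apply kret_nil_inv in H2. subst. auto.
Qed.


Lemma evalR_ind2 (o : nat -> bool) (P : prog -> nat -> nat -> Prop)
 (Hz : forall x, P PZero x 0) (Hs : forall x, P PSucc x (S x))
 (H1 : forall x y, P PProj1 (pair x y) x) (H2 : forall x y, P PProj2 (pair x y) y)
 (Ho : forall x, P POracle x (if o x then 1 else 0))
 (Hp : forall f g x u v, evalR o f x u -> P f x u -> evalR o g x v -> P g x v -> P (PPair f g) x (pair u v))
 (Hc : forall f g x u v, evalR o g x u -> P g x u -> evalR o f u v -> P f u v -> P (PComp f g) x v)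
 (H0 : forall f g x y, evalR o f x y -> P f x y -> P (PPrec f g) (pair x 0) y)
 (HS : forall f g x n z y, evalR o (PPrec f g) (pair x n) z -> P (PPrec f g) (pair x n) z ->
        evalR o g (pair x (pair n z)) y -> P g (pair x (pair n z)) y -> P (PPrec f g) (pair x (S n)) y)
 (Hm : forall f x n, evalR o f (pair x n) 0 -> P f (pair x n) 0 ->
        (forall m, m < n -> exists k, k <> 0 /\ evalR o f (pair x m) k /\ P f (pair x m) k) -> P (PMu f) x n) :
 forall p x y, evalR o p x y -> P p x y.
Proof.
  fix IH 4. intros p x y H. destruct H.
  - apply Hz. - apply Hs. - apply H1. - apply H2. - apply Ho.
  - apply Hp; auto.
  - eapply Hc; eauto.
  - apply H0; auto.
  - eapply HS; eauto.
  - apply Hm; auto. intros m Hm'. destruct (H3 m Hm') as [k [Hk Hev]].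
    exists k. split; [exact Hk|]. split; [exact Hev|]. apply IH. exact Hev.
Qed.

Definition reach s t := exists n, run n s = t.
Lemma reach_refl s : reach s s.
Proof. exists 0; reflexivity. Qed.
Lemma reach_trans s t u : reach s t -> reach t u -> reach s u.
Proof. intros [n H] [m H']. exists (n + m). rewrite run_add, H; auto. Qed.
Lemma reach_step s t u : stepf s = t -> reach t u -> reach s u.
Proof. intros H [m H']. exists (S m). simpl. rewrite H; auto. Qed.

Definition o0' : nat -> bool := fun _ => false.

Definition Pc (p : prog) (x y : nat) : Prop :=
  (forall K, reach (st_eval (encode p) x K) (st_ret y K)) /\
  (forall f g, p = PPrec f g -> forall x0 n, x = pair x0 n -> forall K N, n <= N ->
     reach (st_eval (encode f) x0 (kcons (fr_prec (encode f) (encode g) x0 0 N) K))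
           (st_ret y (kcons (fr_prec (encode f) (encode g) x0 n N) K))).

Lemma completeness_ev pp xx yy : evalR (fun _ => false) pp xx yy -> Pc pp xx yy.
Proof.
  apply evalR_ind2; unfold Pc; intros; (split; [|intros ff gg Heq; try discriminate]).
  - intro K. eapply reach_step; [apply st_zero|apply reach_refl].
  - intro K. eapply reach_step; [apply st_one|apply reach_refl].
  - intro K. eapply reach_step; [apply st_two|]. rewrite fst_pair. apply reach_refl.
  - intro K. eapply reach_step; [apply st_three|]. rewrite snd_pair. apply reach_refl.
  - intro K. eapply reach_step; [apply st_four|apply reach_refl].
  - intro K. simpl encode. eapply reach_step; [apply st_pairc|].
    eapply reach_trans; [apply H0|]. eapply reach_step; [apply st_rpair1|].
    eapply reach_trans; [apply H2|]. eapply reach_step; [apply st_rpair2|apply reach_refl].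
  - intro K. simpl encode. eapply reach_step; [apply st_compc|].
    eapply reach_trans; [apply H0|]. eapply reach_step; [apply st_rcomp|]. apply H2.
  - intro K. simpl encode. eapply reach_step; [apply st_precc|]. rewrite fst_pair, snd_pair.
    eapply reach_trans; [apply (proj1 H0)|]. eapply reach_step; [apply st_rprec_end|apply reach_refl].
  - injection Heq as -> ->. intros x1 n1 Hx K N HN. apply pair_inj in Hx. destruct Hx as [<- <-].
    apply (proj1 H0).
  - destruct H0 as [_ H0]. intro K. simpl encode. eapply reach_step; [apply st_precc|].
    rewrite fst_pair, snd_pair. eapply reach_trans; [apply (H0 f g eq_refl _ _ eq_refl K (S n)); lia|].
    eapply reach_step; [apply st_rprec; lia|]. eapply reach_trans; [apply H2|].
    eapply reach_step; [apply st_rprec_end|apply reach_refl].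
  - injection Heq as -> ->. intros x1 n1 Hx K N HN. apply pair_inj in Hx. destruct Hx as [<- <-].
    destruct H0 as [_ H0]. eapply reach_trans; [apply (H0 ff gg eq_refl _ _ eq_refl K N); lia|].
    eapply reach_step; [apply st_rprec; lia|]. apply (proj1 H2).
  - intro K. simpl encode.
    assert (Hc : forall m, m <= n -> reach (st_eval (8 + 9 * encode f) x K)
               (st_eval (encode f) (pair x m) (kcons (fr_mu (encode f) x m) K))).
    { induction m; intro Hm.
      - eapply reach_step; [apply st_muc|apply reach_refl].
      - eapply reach_trans; [apply IHm; lia|]. destruct (H1 m) as [k [Hk [_ [Hk' _]]]]; [lia|].
        eapply reach_trans; [apply Hk'|]. eapply reach_step; [apply st_rmu; auto|apply reach_refl]. }
    eapply reach_trans; [apply (Hc n); lia|]. eapply reach_trans; [apply H0|].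
    eapply reach_step; [apply st_rmu0|apply reach_refl].
Qed.

Lemma completeness c x y : phi c x y -> exists n, run n (st_eval c x 0) = st_ret y 0.
Proof. intros [p [<- H]]. apply completeness_ev in H. apply H. Qed.

Lemma run_mono n m s v : run n s = st_ret v 0 -> n <= m -> run m s = st_ret v 0.
Proof.
  intros H Hm. replace m with (n + (m - n)) by lia. rewrite run_add, H. apply run_halt.
Qed.

Lemma st_ret_inj v v' : st_ret v 0 = st_ret v' 0 -> v = v'.
Proof. unfold st_ret. intro H. pinj. auto. Qed.

Lemma phi_det c x y1 y2 : phi c x y1 -> phi c x y2 -> y1 = y2.
Proof.
  intros H1 H2. apply completeness in H1. apply completeness in H2.
  destruct H1 as [n1 H1]. destruct H2 as [n2 H2].
  apply st_ret_inj. rewrite <- (run_mono n1 (n1 + n2) _ _ H1), <- (run_mono n2 (n1 + n2) _ _ H2); auto; lia.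
Qed.

Lemma phi_iff c x y : phi c x y <-> valid c /\ exists n, run n (st_eval c x 0) = st_ret y 0.
Proof.
  split.
  - intro H. split; [eapply phi_valid; eauto|apply completeness; auto].
  - intros [Hc [n H]]. eapply soundness; eauto.
Qed.


Lemma noorc_STEP : noorc STEP = true.
Proof. vm_compute. reflexivity. Qed.

Lemma den_STEP o s : den o STEP s = stepf s.
Proof. unfold stepf. apply den_noorc. apply noorc_STEP. Qed.

Definition RUNE : fexp := EPrec (EPair (EPair (EK 0) EId) EZero) (STEP @ Z3).

Lemma den_RUNE o c x n : den o RUNE (pair (pair c x) n) = run n (st_eval c x 0).
Proof.
  unfold RUNE. cbn [den]. sp. unfold precf. induction n; cbn [nat_rect].
  - cbn [den]. rewrite den_K, den_Id. reflexivity.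
  - cbn [den]. rewrite den_Z3, den_STEP, IHn, run_S. reflexivity.
Qed.

Definition HALTS : fexp := EIfEq (EFst @ EFst) (EK 1) (EIfEq ESnd (EK 0) EZero (EK 1)) (EK 1).
Lemma den_HALTS o s : den o HALTS s = 0 <-> exists v, s = st_ret v 0.
Proof.
  unfold HALTS. rewrite !den_IfEq. cbn [den]. rewrite !den_K.
  destruct (pair_surj s) as [m [K ->]]. destruct (pair_surj m) as [t [v ->]]. sp.
  unfold st_ret. split.
  - destruct (Nat.eqb_spec t 1); [|discriminate]. destruct (Nat.eqb_spec K 0); [|discriminate].
    subst. eauto.
  - intros [v' H]. apply pair_inj in H. destruct H as [H1 ->]. apply pair_inj in H1.
    destruct H1 as [-> ->]. reflexivity.
Qed.
Lemma den_HALTS_01 o s : den o HALTS s <= 1.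
Proof.
  unfold HALTS. rewrite !den_IfEq. cbn [den]. rewrite !den_K.
  destruct (_ =? _); [destruct (_ =? _)|]; cbn [den]; lia.
Qed.

Definition OUTV : fexp := ESnd @ EFst.
Lemma den_OUTV o v K : den o OUTV (st_ret v K) = v.
Proof. unfold OUTV, st_ret. cbn [den]. sp. reflexivity. Qed.

Definition bitf (a j : nat) : nat := (a / 2 ^ j) mod 2.

Lemma den_Bit' o n z : den o EBit (pair n z) = bitf n z.
Proof. unfold EBit, bitf. cbn [den]. rewrite den_HalfIt, den_DM by lia. sp. reflexivity. Qed.

Lemma bitf_01 a j : bitf a j <= 1.
Proof. unfold bitf. pose proof (Nat.mod_upper_bound (a / 2 ^ j) 2). lia. Qed.

Definition vbit (i mask : nat) : nat :=
  if i <=? 4 then 1 else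
  let r := i mod 9 in let k := i / 9 in
  if (r =? 5) || (r =? 6) || (r =? 7) then
    (if bitf mask (fst (unpair k)) + bitf mask (snd (unpair k)) =? 2 then 1 else 0)
  else if r =? 8 then bitf mask k else 0.

Definition VB : fexp :=
  let I := EFst in let M := ESnd in
  let R := ESnd @ EDM 9 @ I in let Kk := EFst @ EDM 9 @ I in
  let BOTH := EIfEq (EAdd (EBit @ EPair M (EFst @ Kk)) (EBit @ EPair M (ESnd @ Kk))) (EK 2) (EK 1) (EK 0) in
  EIfLe I (EK 4) (EK 1)
   (EIfEq R (EK 5) BOTH (EIfEq R (EK 6) BOTH (EIfEq R (EK 7) BOTH
     (EIfEq R (EK 8) (EBit @ EPair M Kk) (EK 0))))).

Lemma den_VB o i mask : den o VB (pair i mask) = vbit i mask.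
Proof.
  unfold VB, vbit. rewrite den_IfLe. cbn [den]. rewrite !den_K. sp.
  destruct (i <=? 4); [reflexivity|].
  rewrite !den_IfEq. cbn [den]. rewrite ?den_IfEq, !den_K, !den_Add. cbn [den].
  rewrite den_DM by lia. sp. rewrite !den_Bit', ?den_K.
  destruct (i mod 9 =? 5); [reflexivity|]. destruct (i mod 9 =? 6); [reflexivity|].
  destruct (i mod 9 =? 7); [reflexivity|]. simpl. reflexivity.
Qed.

Definition tbl (n : nat) : nat * nat :=
  nat_rect (fun _ => (nat * nat)%type) (0, 1)
    (fun i z => ((if vbit i (fst z) =? 1 then fst z + snd z else fst z), 2 * snd z)) n.

Definition VT : fexp :=
  EPrec (EPair EZero (EK 1))
    (EPair (EIfEq (VB @ EPair I3 (EFst @ Z3)) (EK 1) (EAdd (EFst @ Z3) (ESnd @ Z3)) (EFst @ Z3))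
           (EMulK 2 (ESnd @ Z3))).

Lemma den_VT o c n : den o VT (pair c n) = pair (fst (tbl n)) (snd (tbl n)).
Proof.
  unfold VT. cbn [den]. sp. unfold precf. induction n; cbn [nat_rect].
  - cbn [den]. rewrite den_K. reflexivity.
  - cbn [den]. rewrite den_IfEq, den_MulK, den_Add. cbn [den].
    rewrite !den_Z3, den_I3, IHn, den_K. sp. rewrite den_VB. simpl tbl. cbn [fst snd].
    destruct (vbit n (fst (tbl n)) =? 1); reflexivity.
Qed.

Lemma bitf_low m n j b : m < 2 ^ n -> j < n -> bitf (m + b * 2 ^ n) j = bitf m j.
Proof.
  intros Hm Hj. unfold bitf.
  assert (E : b * 2 ^ n = (b * 2 ^ (n - j - 1)) * 2 * 2 ^ j).
  { rewrite <- !Nat.mul_assoc. f_equal. rewrite <- Nat.pow_succ_r', <- Nat.pow_add_r. f_equal. lia. }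
  rewrite E, Nat.div_add by (apply Nat.pow_nonzero; lia).
  apply Nat.mod_add. lia.
Qed.

Lemma bitf_high m n b : m < 2 ^ n -> b <= 1 -> bitf (m + b * 2 ^ n) n = b.
Proof.
  intros Hm Hb. unfold bitf. rewrite Nat.div_add by (apply Nat.pow_nonzero; lia).
  rewrite Nat.div_small by auto. simpl. destruct b as [|[|]]; simpl; lia.
Qed.

Lemma valid_char i : 4 < i -> (valid i <->
  ((i mod 9 = 5 \/ i mod 9 = 6 \/ i mod 9 = 7) /\ valid (fst (unpair (i / 9))) /\ valid (snd (unpair (i / 9))))
  \/ (i mod 9 = 8 /\ valid (i / 9))).
Proof.
  intro Hi. rewrite valid_dec. split.
  - intros [H|[(p & q & H & Hp & Hq)|(f & H & Hf)]]; [lia| |].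
    + left. destruct H as [ -> | [ -> | -> ] ].
      * destruct (divmod9 5 (pair p q)) as [H1 H2]; [lia|]. rewrite H1, H2, unpair_pair. auto.
      * destruct (divmod9 6 (pair p q)) as [H1 H2]; [lia|]. rewrite H1, H2, unpair_pair. auto.
      * destruct (divmod9 7 (pair p q)) as [H1 H2]; [lia|]. rewrite H1, H2, unpair_pair. auto.
    + right. subst. destruct (divmod9 8 f) as [H1 H2]; [lia|]. rewrite H1, H2. auto.
  - assert (Hc9 : i = i mod 9 + 9 * (i / 9)) by (pose proof (Nat.div_mod i 9); lia).
    intros [[H [Hp Hq]]|[H Hf]]; right.
    + left. exists (fst (unpair (i / 9))), (snd (unpair (i / 9))). rewrite pair_unpair.
      split; auto. lia.
    + right. exists (i / 9). split; auto. lia.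
Qed.

Lemma tbl_spec n : snd (tbl n) = 2 ^ n /\ fst (tbl n) < 2 ^ n /\
  forall j, j < n -> (bitf (fst (tbl n)) j = 1 <-> valid j).
Proof.
  induction n.
  - simpl. split; [reflexivity|split; [lia|intros; lia]].
  - destruct IHn as [H1 [H2 H3]]. simpl tbl. cbn [fst snd]. rewrite H1.
    assert (Hv : vbit n (fst (tbl n)) = 1 <-> valid n).
    { unfold vbit. destruct (Nat.leb_spec n 4).
      - split; auto. intros _. apply valid_dec. auto.
      - rewrite valid_char by auto.
        assert (Hk : n / 9 < n) by (apply Nat.div_lt; lia).
        pose proof (pair_unpair (n / 9)) as Hpu. pose proof (pair_ge (fst (unpair (n/9))) (snd (unpair (n/9)))).
        destruct (Nat.eqb_spec (n mod 9) 5); [|destruct (Nat.eqb_spec (n mod 9) 6);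
          [|destruct (Nat.eqb_spec (n mod 9) 7)]]; cbn [orb].
        1-3: rewrite <- (H3 (fst (unpair (n / 9)))), <- (H3 (snd (unpair (n / 9)))) by lia;
          pose proof (bitf_01 (fst (tbl n)) (fst (unpair (n / 9))));
          pose proof (bitf_01 (fst (tbl n)) (snd (unpair (n / 9))));
          destruct (Nat.eqb_spec (bitf (fst (tbl n)) (fst (unpair (n / 9))) + bitf (fst (tbl n)) (snd (unpair (n / 9)))) 2);
          split; intros; try lia; try (left; repeat split; lia); destruct H7 as [[? [? ?]]|[? ?]]; lia.
        destruct (Nat.eqb_spec (n mod 9) 8).
        + rewrite <- (H3 (n / 9)) by lia. split; [intro; right; auto|intros [[? ?]|[? ?]]; auto; lia].
        + split; [lia|]. intros [[? ?]|[? ?]]; lia. }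
    set (m := fst (tbl n)) in *.
    assert (Hm : (if vbit n m =? 1 then m + 2 ^ n else m) = m + (if vbit n m =? 1 then 1 else 0) * 2 ^ n)
      by (destruct (vbit n m =? 1); lia).
    rewrite Hm. split; [simpl; lia|]. split.
    + simpl. destruct (vbit n m =? 1); lia.
    + intros j Hj. assert (j < n \/ j = n) as [Hj' | ->] by lia.
      * rewrite bitf_low by auto. auto.
      * rewrite bitf_high by (auto; destruct (_ =? _); lia). rewrite <- Hv.
        destruct (Nat.eqb_spec (vbit n m) 1); split; intro; try lia.
Qed.

Definition VALIDE : fexp := EBit @ EPair (EFst @ VT @ EPair EId ESucc) EId.
Lemma den_VALIDE o c : den o VALIDE c = 1 <-> valid c.
Proof.
  unfold VALIDE. cbn [den]. rewrite den_Id, den_VT. sp. rewrite den_Bit'.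
  destruct (tbl_spec (S c)) as [_ [_ H]]. apply H. lia.
Qed.
Lemma den_VALIDE_01 o c : den o VALIDE c <= 1.
Proof. unfold VALIDE. cbn [den]. rewrite den_Id, den_VT. sp. rewrite den_Bit'. apply bitf_01. Qed.


Strategy opaque [pair unpair].

Definition HLT0 : fexp := EIfEq (VALIDE @ EFst @ EFst) (EK 1) (HALTS @ RUNE) (EK 1).
Definition OUT0 : fexp := OUTV @ RUNE.

Definition Hf (c x n : nat) : nat := den (fun _ => false) HLT0 (pair (pair c x) n).
Definition Of (c x n : nat) : nat := den (fun _ => false) OUT0 (pair (pair c x) n).

Lemma noorc_HLT0 : noorc HLT0 = true.
Proof. vm_compute. reflexivity. Qed.
Lemma noorc_OUT0 : noorc OUT0 = true.
Proof. vm_compute. reflexivity. Qed.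

Definition HLTF (cf xf nf : fexp) : fexp := HLT0 @ EPair (EPair cf xf) nf.
Definition OUTF (cf xf nf : fexp) : fexp := OUT0 @ EPair (EPair cf xf) nf.

Lemma den_HLTF o cf xf nf w : den o (HLTF cf xf nf) w = Hf (den o cf w) (den o xf w) (den o nf w).
Proof. unfold HLTF, Hf. cbn [den]. apply den_noorc, noorc_HLT0. Qed.
Lemma den_OUTF o cf xf nf w : den o (OUTF cf xf nf) w = Of (den o cf w) (den o xf w) (den o nf w).
Proof. unfold OUTF, Of. cbn [den]. apply den_noorc, noorc_OUT0. Qed.

Lemma Hf_iff c x n : Hf c x n = 0 <-> valid c /\ exists v, run n (st_eval c x 0) = st_ret v 0.
Proof.
  unfold Hf, HLT0. rewrite den_IfEq. cbn [den]. sp. rewrite den_K.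
  pose proof (den_VALIDE_01 (fun _ => false) c). pose proof (den_VALIDE (fun _ => false) c).
  destruct (Nat.eqb_spec (den (fun _ : nat => false) VALIDE c) 1).
  - rewrite den_RUNE, den_HALTS. tauto.
  - split; [discriminate|]. intros [Hc _]. apply H0 in Hc. lia.
Qed.

Lemma Hf_01 c x n : Hf c x n <= 1.
Proof.
  unfold Hf, HLT0. rewrite den_IfEq. cbn [den]. sp. rewrite den_K.
  destruct (_ =? _); [apply den_HALTS_01|]. cbn [den]. lia.
Qed.

Lemma Of_run c x n v : run n (st_eval c x 0) = st_ret v 0 -> Of c x n = v.
Proof. intro H. unfold Of, OUT0. cbn [den]. rewrite den_RUNE, H. apply den_OUTV. Qed.

Lemma Hf_sound c x n : Hf c x n = 0 -> phi c x (Of c x n).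
Proof.
  intro H. apply Hf_iff in H. destruct H as [Hc [v Hv]]. rewrite (Of_run _ _ _ _ Hv).
  eapply soundness; eauto.
Qed.

Lemma Hf_complete c x y : phi c x y -> exists n, forall m, n <= m -> Hf c x m = 0 /\ Of c x m = y.
Proof.
  intro H. pose proof (phi_valid _ _ _ H) as Hc. apply completeness in H. destruct H as [n Hn].
  exists n. intros m Hm. pose proof (run_mono _ _ _ _ Hn Hm) as H'.
  split; [apply Hf_iff; eauto|]. apply Of_run; auto.
Qed.

Lemma Hf_mono c x n m : Hf c x n = 0 -> n <= m -> Hf c x m = 0 /\ Of c x m = Of c x n.
Proof.
  intros H Hm. pose proof (Hf_sound _ _ _ H) as Hs. apply Hf_iff in H. destruct H as [Hc [v Hv]].
  pose proof (run_mono _ _ _ _ Hv Hm).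
  split; [apply Hf_iff; eauto|]. rewrite (Of_run _ _ _ _ Hv). apply Of_run; auto.
Qed.

Lemma ev_compile_det_aux o : forall p x y, evalR o p x y -> forall e, p = compile e -> y = den o e x.
Proof.
  apply (evalR_ind2 o (fun p x y => forall e, p = compile e -> y = den o e x));
    intros until e; intro Heq; destruct e; cbn [compile] in Heq; try discriminate; cbn [den]; sp; auto.
  - injection Heq as Ha Hb. erewrite (H0 e1), (H2 e2); auto.
  - injection Heq as Ha Hb. erewrite (H0 e2) in H1 by auto. erewrite (H2 e1); auto.
  - injection Heq as Ha Hb. unfold precf. cbn [nat_rect]. apply H0; auto.
  - injection Heq as Ha Hb. subst. specialize (H0 (EPrec e1 e2) eq_refl). cbn [den] in H0. rewrite unpair_pair in H0. cbn [fst snd] in H0.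
    rewrite (H2 e2 eq_refl), H0. reflexivity.
Qed.
Lemma ev_compile_det o e x y : evalR o (compile e) x y -> y = den o e x.
Proof. intro H. eapply ev_compile_det_aux; eauto. Qed.

Lemma ev_compile o e x : evalR o (compile e) x (den o e x).
Proof. apply compile_correct. Qed.

Lemma mu_sound o Q x n : evalR o (PMu (compile Q)) x n ->
  den o Q (pair x n) = 0 /\ forall m, m < n -> den o Q (pair x m) <> 0.
Proof.
  intro H. inversion H; subst. split.
  - symmetry. apply ev_compile_det. assumption.
  - intros m Hm. match goal with Hl : forall m, m < n -> _ |- _ => destruct (Hl m Hm) as [k [Hk Hk']] end.
    apply ev_compile_det in Hk'. congruence.
Qed.

Lemma least_witness (P : nat -> Prop) (Pdec : forall n, {P n} + {~ P n}) :
  forall n, P n -> exists n, P n /\ forall m, m < n -> ~ P m.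
Proof.
  intro n. induction n as [n IH] using (well_founded_induction lt_wf). intro Hn.
  assert (D : (exists m, m < n /\ P m) \/ forall m, m < n -> ~ P m).
  { clear IH Hn. induction n.
    - right. intros; lia.
    - destruct IHn as [[m [Hm Pm]]|H].
      + left. exists m. split; auto.
      + destruct (Pdec n) as [Pn|Pn].
        * left. exists n. auto.
        * right. intros m Hm. assert (m < n \/ m = n) as [|] by lia; subst; auto. }
  destruct D as [[m [Hm Pm]]|H]; eauto.
Qed.

Lemma mu_complete o Q x : (exists n, den o Q (pair x n) = 0) ->
  exists n, evalR o (PMu (compile Q)) x n /\ den o Q (pair x n) = 0.
Proof.
  intros [n Hn]. destruct (least_witness (fun n => den o Q (pair x n) = 0)
    (fun n => Nat.eq_dec _ 0) n Hn) as [m [Hm Hlt]].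
  exists m. split; auto. constructor.
  - rewrite <- Hm. apply compile_correct.
  - intros k Hk. exists (den o Q (pair x k)). split; [apply Hlt; auto|apply compile_correct].
Qed.

Lemma encK n : encode (compile (EK (S n))) = 6 + 9 * pair 1 (encode (compile (EK n))).
Proof. reflexivity. Qed.
Definition BB := EAdd (EK 6) (EMulK 9 (EPair (EK 1) Z3)).
Lemma den_BB o x i z : den o BB (pair x (pair i z)) = 6 + 9 * pair 1 z.
Proof. unfold BB. rewrite den_Add, den_MulK, den_K. cbn [den]. rewrite den_K, den_Z3. reflexivity. Qed.
Definition CK : fexp := EPrec EZero BB @ EPair EZero EId.
Lemma den_CK o n : den o CK n = encode (compile (EK n)).
Proof.
  unfold CK. cbn [den]. rewrite den_Id. sp. unfold precf. induction n.
  - reflexivity.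
  - cbn [nat_rect]. rewrite den_BB, IHn, encK. reflexivity.
Qed.

Definition spec (cP n : nat) : nat := 6 + 9 * pair cP (5 + 9 * pair (encode (compile (EK n))) (encode (compile EId))).

Definition SPECF (cP : nat) (nf : fexp) : fexp :=
  EAdd (EK 6) (EMulK 9 (EPair (EK cP) (EAdd (EK 5) (EMulK 9 (EPair (CK @ nf) (EK (encode (compile EId)))))))).
Lemma den_SPECF o cP nf w : den o (SPECF cP nf) w = spec cP (den o nf w).
Proof.
  unfold SPECF, spec. rewrite den_Add, den_MulK, den_K. cbn [den]. rewrite den_K, den_Add, den_MulK, den_K.
  cbn [den]. rewrite den_K, den_CK. reflexivity.
Qed.

Lemma phi_spec P n z y : phi (spec (encode P) n) z y <-> evalR (fun _ => false) P (pair n z) y.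
Proof.
  unfold spec. change (6 + 9 * pair (encode P) (5 + 9 * pair (encode (compile (EK n))) (encode (compile EId))))
    with (encode (PComp P (PPair (compile (EK n)) (compile EId)))).
  unfold phi. rewrite phiO_enc. split.
  - intro H. inversion H; subst.
    match goal with Hp : evalR _ (PPair _ _) _ _ |- _ => inversion Hp; subst end.
    match goal with H1 : evalR _ (compile (EK n)) _ _ |- _ => apply ev_compile_det in H1; rewrite den_K in H1 end.
    match goal with H1 : evalR _ (PPair PProj1 PProj2) _ _ |- _ => change (PPair PProj1 PProj2) with (compile EId) in H1; apply ev_compile_det in H1; rewrite den_Id in H1 end.
    subst. assumption.
  - intro H. pose proof (compile_correct (fun _ => false) (EK n) z) as h1. rewrite den_K in h1.
    pose proof (compile_correct (fun _ => false) EId z) as h2. rewrite den_Id in h2.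
    eapply ev_comp; [apply ev_pair; eassumption|exact H].
Qed.


Ltac dsimp := repeat (progress (cbn [den]; rewrite ?den_Add, ?den_IfLe, ?den_IfEq, ?den_HLTF, ?den_OUTF,
   ?den_K, ?den_Id, ?den_Sum, ?den_Bit', ?den_SPECF; sp)).

Definition MU (T : fexp) : prog := PPair (compile EId) (PMu (compile T)).

Lemma MU_sound o T w v : evalR o (MU T) w v -> exists m, v = pair w m /\ den o T (pair w m) = 0 /\
   forall k, k < m -> den o T (pair w k) <> 0.
Proof.
  intro H. inversion H; subst.
  match goal with H1 : evalR _ (PPair PProj1 PProj2) _ _ |- _ => change (PPair PProj1 PProj2) with (compile EId) in H1; apply ev_compile_det in H1; rewrite den_Id in H1 end.
  match goal with H1 : evalR _ (PMu _) _ _ |- _ => apply mu_sound in H1 end.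
  subst. eexists; split; [reflexivity|]. tauto.
Qed.

Lemma MU_complete o T w : (exists m, den o T (pair w m) = 0) ->
  exists m, evalR o (MU T) w (pair w m) /\ den o T (pair w m) = 0.
Proof.
  intro H. destruct (mu_complete o T w H) as [m [H1 H2]]. exists m. split; auto.
  unfold MU. pose proof (compile_correct o EId w) as h. rewrite den_Id in h. constructor; auto.
Qed.

Lemma comp_inv o f g x y : evalR o (PComp f g) x y -> exists u, evalR o g x u /\ evalR o f u y.
Proof. intro H. inversion H; subst. eauto. Qed.

Lemma defined_enc P x : defined (encode P) x <-> exists y, evalR (fun _ => false) P x y.
Proof. unfold defined, phi. split; intros [y Hy]; exists y; apply phiO_enc; auto. Qed.

Definition QD (ca : nat) : fexp :=
  let S' := EFst in let T := EFst @ ESnd in let N := ESnd @ ESnd in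
  EAdd (EIfLe (ESucc @ S') T EZero (EK 1))
  (EAdd (HLTF (EK ca) S' N) (EAdd (HLTF (EK ca) T N)
     (EIfLe (ESucc @ OUTF (EK ca) T N) (OUTF (EK ca) S' N) EZero (EK 1)))).

Lemma den_QD o ca s t N : den o (QD ca) (pair s (pair t N)) = 0 <->
  s < t /\ Hf ca s N = 0 /\ Hf ca t N = 0 /\ Of ca t N < Of ca s N.
Proof.
  unfold QD. dsimp.
  destruct (Nat.leb_spec (S s) t); destruct (Nat.leb_spec (S (Of ca t N)) (Of ca s N)); dsimp;
  pose proof (Hf_01 ca s N); pose proof (Hf_01 ca t N); lia.
Qed.

Lemma det_a (ca : nat) (a : nat -> nat) : (forall x, phi ca x (a x)) ->
  forall x N, Hf ca x N = 0 -> Of ca x N = a x.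
Proof. intros Ha x N H. apply Hf_sound in H. eapply phi_det; eauto. Qed.

Lemma a_fuel (ca : nat) (a : nat -> nat) : (forall x, phi ca x (a x)) ->
  forall s, exists N, forall N', N <= N' -> forall t, t <= s -> Hf ca t N' = 0.
Proof.
  intros Ha s. induction s.
  - destruct (Hf_complete _ _ _ (Ha 0)) as [N HN]. exists N. intros N' HN' t Ht.
    assert (t = 0) by lia. subst. apply HN; auto.
  - destruct IHs as [N1 H1]. destruct (Hf_complete _ _ _ (Ha (S s))) as [N2 HN2].
    exists (N1 + N2). intros N' HN' t Ht. assert (t <= s \/ t = S s) as [|] by lia.
    + apply H1; auto; lia.
    + subst. apply HN2; lia.
Qed.

Lemma re_deficiency (ca : nat) (a : nat -> nat) : (forall x, phi ca x (a x)) -> re (deficiency a).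
Proof.
  intro Ha. exists (encode (PMu (compile (QD ca)))). intro s. unfold W. rewrite defined_enc.
  unfold deficiency. split.
  - intros [t [Hst Ht]].
    destruct (a_fuel ca a Ha t) as [N HN].
    destruct (mu_complete (fun _ => false) (QD ca) s) as [m [Hm _]].
    { exists (pair t N). apply den_QD. repeat split; auto; try (apply HN; lia).
      rewrite !(det_a ca a Ha _ N) by (apply HN; lia). auto. }
    eauto.
  - intros [m Hm]. apply mu_sound in Hm. destruct Hm as [Hm _].
    destruct (pair_surj m) as [t [N ->]]. apply den_QD in Hm. destruct Hm as [H1 [H2 [H3 H4]]].
    exists t. split; auto. rewrite !(det_a ca a Ha _ N) in H4 by auto. auto.
Qed.


Lemma sumto_ext f g n : (forall i, f i = g i) -> sumto f n = sumto g n.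
Proof. intro H. induction n; simpl; auto. Qed.

Definition SUMH (ca : nat) : fexp := ESum (HLTF (EK ca) ESnd EFst).
Lemma den_SUMH o ca N s : den o (SUMH ca) (pair N s) = sumto (fun t => Hf ca t N) s.
Proof. unfold SUMH. rewrite den_Sum. apply sumto_ext. intro i. dsimp. reflexivity. Qed.

Definition SUMO (ca : nat) : fexp :=
  ESum (EIfEq (OUTF (EK ca) ESnd (EFst @ EFst)) (ESnd @ EFst) (EK 1) EZero).
Lemma den_SUMO o ca N z s : den o (SUMO ca) (pair (pair N z) s) =
  sumto (fun t => if Of ca t N =? z then 1 else 0) s.
Proof. unfold SUMO. rewrite den_Sum. apply sumto_ext. intro i. dsimp. reflexivity. Qed.

Definition TG (ca : nat) : fexp :=
  let Ee := EFst @ EFst in let Ez := ESnd @ EFst in let Es := EFst @ ESnd in let EN := ESnd @ ESnd in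
  EAdd (HLTF Ee Es EN) (EAdd (SUMH ca @ EPair EN (ESucc @ Es)) (EIfLe (OUTF (EK ca) Es EN) Ez (EK 1) EZero)).

Lemma den_TG o ca e z s N : den o (TG ca) (pair (pair e z) (pair s N)) = 0 <->
  Hf e s N = 0 /\ (forall t, t <= s -> Hf ca t N = 0) /\ z < Of ca s N.
Proof.
  unfold TG. dsimp. rewrite den_SUMH.
  pose proof (sumto_zero (fun t => Hf ca t N) (S s)) as Hs.
  destruct (Nat.leb_spec (Of ca s N) z); dsimp.
  - split; [lia|]. intros [_ [_ H']]. lia.
  - split.
    + intro H0. split; [lia|]. split; [|lia]. intros t Ht. apply Hs; lia.
    + intros [H1 [H2 _]]. assert (sumto (fun t => Hf ca t N) (S s) = 0) by (apply Hs; intros; apply H2; lia). lia.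
Qed.

Definition OUTG (ca : nat) : fexp :=
  let Ez := ESnd @ EFst in let Es := EFst @ ESnd in let EN := ESnd @ ESnd in
  EIfEq (SUMO ca @ EPair (EPair EN Ez) (ESucc @ Es)) (EK 0) EZero (EK 1).

Lemma den_OUTG o ca e z s N : den o (OUTG ca) (pair (pair e z) (pair s N)) =
  if sumto (fun t => if Of ca t N =? z then 1 else 0) (S s) =? 0 then 0 else 1.
Proof. unfold OUTG. dsimp. rewrite den_SUMO. destruct (_ =? 0); reflexivity. Qed.

Definition P1 (ca : nat) : prog := PComp (compile (OUTG ca)) (MU (TG ca)).
Definition gfun (ca e : nat) : nat := spec (encode (P1 ca)) e.

Lemma canon_lt F z : canon F z -> z < F.
Proof.
  unfold canon. intro H. pose proof (Nat.testbit_spec' F z) as E. rewrite H in E. simpl in E.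
  destruct (Nat.lt_ge_cases F (2 ^ z)) as [Hl|Hl].
  - rewrite Nat.div_small in E by auto. simpl in E. discriminate.
  - pose proof (Nat.pow_gt_lin_r 2 z). lia.
Qed.

Lemma map_NoDup_inj (f : nat -> nat) l : (forall x y, f x = f y -> x = y) -> NoDup l -> NoDup (map f l).
Proof.
  intros Hf H. induction H; simpl; constructor; auto.
  intro Hin. apply in_map_iff in Hin. destruct Hin as [y [Hy Hin]]. apply Hf in Hy. subst. auto.
Qed.

Lemma big_elem (f : nat -> nat) l F : (forall x y, f x = f y -> x = y) -> NoDup l -> F < length l ->
  exists s, In s l /\ F <= f s.
Proof.
  intros Hf Hl HF. apply NNPP. intro Hn.
  assert (incl (map f l) (seq 0 F)).
  { intros v Hv. apply in_map_iff in Hv. destruct Hv as [s [<- Hs]]. apply in_seq.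
    assert (~ F <= f s) by (intro; apply Hn; eauto). lia. }
  pose proof (NoDup_incl_length (map_NoDup_inj f l Hf Hl) H). rewrite length_map, length_seq in H0. lia.
Qed.

Lemma sumto_ind_zero (f : nat -> nat) z n : sumto (fun t => if f t =? z then 1 else 0) n = 0 <->
  forall t, t < n -> f t <> z.
Proof.
  rewrite sumto_zero. split; intros H t Ht; specialize (H t Ht).
  - destruct (Nat.eqb_spec (f t) z); [discriminate|auto].
  - destruct (Nat.eqb_spec (f t) z); [contradiction|auto].
Qed.


Lemma part1_bound (A : nat -> Prop) (a : nat -> nat) (ca : nat) (fc : nat -> nat)
 (HDW : forall e, (forall z, canon (fc e) z -> defined e z) ->
      exists z, canon (fc e) z /\ exists y, phi e z y /\ ~ chi A z y)
 (Ha : forall x, phi ca x (a x)) (Hinj : forall s t, a s = a t -> s = t)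
 (HA : forall x, A x <-> exists t, a t = x)
 e (He : forall x, W e x -> ~ deficiency a x) l (Hl : NoDup l) (HlW : forall s, In s l -> W e s) :
 length l <= fc (gfun ca e).
Proof.
  set (F := fc (gfun ca e)). destruct (le_lt_dec (length l) F) as [|HF]; auto. exfalso.
  assert (Htot : forall z, canon F z -> defined (gfun ca e) z).
  { intros z Hz. apply canon_lt in Hz. destruct (big_elem a l F Hinj Hl HF) as [s [Hs Has]].
    destruct (HlW s Hs) as [y1 Hy1]. destruct (Hf_complete _ _ _ Hy1) as [N1 HN1].
    destruct (a_fuel ca a Ha s) as [N2 HN2].
    destruct (MU_complete (fun _ => false) (TG ca) (pair e z)) as [m [Hm _]].
    { exists (pair s (N1 + N2)). apply den_TG. split; [apply HN1; lia|]. split.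
      - intros t Ht. apply HN2; auto; lia.
      - rewrite (det_a ca a Ha s) by (apply HN2; lia). lia. }
    exists (den (fun _ => false) (OUTG ca) (pair (pair e z) m)).
    unfold gfun. apply phi_spec. unfold P1. econstructor; [exact Hm|apply compile_correct]. }
  destruct (HDW _ Htot) as [z [Hz [y [Hy Hchi]]]].
  apply phi_spec in Hy. unfold P1 in Hy. apply comp_inv in Hy. destruct Hy as [u [Hu Hy]].
  apply MU_sound in Hu. destruct Hu as [m [-> [Hm _]]]. apply ev_compile_det in Hy.
  destruct (pair_surj m) as [s [N ->]]. apply den_TG in Hm. destruct Hm as [H1 [H2 H3]].
  rewrite den_OUTG in Hy.
  assert (HsD : ~ deficiency a s) by (apply He; exists (Of e s N); apply Hf_sound; auto).
  assert (Hout : forall t, t <= s -> Of ca t N = a t) by (intros t Ht; exact (det_a ca a Ha t N (H2 t Ht))).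
  apply Hchi. unfold chi.
  destruct (Nat.eqb_spec (sumto (fun t => if Of ca t N =? z then 1 else 0) (S s)) 0) as [E|E].
  - right. split; auto. intro HAz. apply HA in HAz. destruct HAz as [t Ht].
    rewrite sumto_ind_zero in E. destruct (le_lt_dec t s) as [Hts|Hts].
    + apply (E t); [lia|]. rewrite Hout; auto.
    + apply HsD. exists t. split; auto. rewrite Hout in H3 by lia. lia.
  - left. split; auto. apply HA. apply NNPP. intro Hn. apply E. apply sumto_ind_zero.
    intros t Ht Heq. apply Hn. exists t. rewrite <- Hout by lia. auto.
Qed.

Lemma finite_cover (P : nat -> Prop) (B : nat) :
  (forall l, NoDup l -> (forall x, In x l -> P x) -> length l <= B) ->
  exists l, length l <= B /\ forall x, P x -> In x l.
Proof.
  intro H.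
  assert (G : forall k, (exists l, NoDup l /\ (forall x, In x l -> P x) /\ length l = k) \/
                        (exists l, length l <= B /\ forall x, P x -> In x l)).
  { induction k.
    - left. exists nil. split; [constructor|]. split; [intros x []|reflexivity].
    - destruct IHk as [[l [Hl [HP Hlen]]]|Hc]; [|right; auto].
      destruct (classic (forall x, P x -> In x l)) as [Hall|Hn].
      + right. exists l. split; auto.
      + apply not_all_ex_not in Hn. destruct Hn as [x Hx]. apply imply_to_and in Hx. destruct Hx as [Px Hx].
        left. exists (x :: l). split; [constructor; auto|]. split.
        * intros y [<-|Hy]; auto.
        * simpl. lia. }
  destruct (G (S B)) as [[l [Hl [HP Hlen]]]|Hc]; auto.
  specialize (H l Hl HP). lia.
Qed.


Lemma computable_prog (f : nat -> nat) : computable f -> exists P, forall x, evalR (fun _ => false) P x (f x).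
Proof.
  intros [c Hc]. destruct (Hc 0) as [P [HP _]]. exists P. intro x.
  destruct (Hc x) as [Q [HQ H]]. rewrite <- HQ in HP. apply encode_inj in HP. subst. auto.
Qed.

Lemma computable_comp_fexp (f : nat -> nat) (G : fexp) :
  computable f -> computable (fun x => f (den (fun _ => false) G x)).
Proof.
  intro Hf. destruct (computable_prog f Hf) as [P HP].
  exists (encode (PComp P (compile G))). intro x. unfold phi. apply phiO_enc.
  econstructor; [apply compile_correct|apply HP].
Qed.

Theorem part1 (A : nat -> Prop) (a : nat -> nat) :
  DWEU A -> computable a -> (forall s t, a s = a t -> s = t) ->
  (forall x, A x <-> exists t, a t = x) -> effectively_simple (deficiency a).
Proof.
  intros [_ [fc [Hfc HDW]]] [ca Ha] Hinj HA. split.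
  - apply (re_deficiency ca a Ha).
  - exists (fun e => fc (den (fun _ => false) (SPECF (encode (P1 ca)) EId) e)). split.
    + apply computable_comp_fexp; auto.
    + intros e He. rewrite den_SPECF, den_Id. apply finite_cover.
      intros l Hl HlW. exact (part1_bound A a ca fc HDW Ha Hinj HA e He l Hl HlW).
Qed.


Definition T2 : fexp := HLTF (EFst @ EFst) (EFst @ EFst) ESnd.
Lemma den_T2 o x z n : den o T2 (pair (pair x z) n) = Hf x x n.
Proof. unfold T2. dsimp. reflexivity. Qed.

Definition OUT2 (eA : nat) : fexp := EIfEq (HLTF (EK eA) (ESnd @ EFst) ESnd) (EK 0) (EK 1) EZero.
Lemma den_OUT2 o eA x z s : den o (OUT2 eA) (pair (pair x z) s) = if Hf eA z s =? 0 then 1 else 0.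
Proof. unfold OUT2. dsimp. destruct (_ =? 0); reflexivity. Qed.

Definition P2 (eA : nat) : prog := PComp (compile (OUT2 eA)) (MU T2).
Definition ecode (eA x : nat) : nat := spec (encode (P2 eA)) x.

Definition TF (eA cfc : nat) : fexp := HLTF (EK cfc) (SPECF (encode (P2 eA)) EFst) ESnd.
Lemma den_TF o eA cfc x N : den o (TF eA cfc) (pair x N) = Hf cfc (ecode eA x) N.
Proof. unfold TF. dsimp. reflexivity. Qed.

Definition FEX (eA cfc : nat) : fexp := OUTF (EK cfc) (SPECF (encode (P2 eA)) EFst) ESnd.
Lemma den_FEX o eA cfc x N : den o (FEX eA cfc) (pair x N) = Of cfc (ecode eA x) N.
Proof. unfold FEX. dsimp. reflexivity. Qed.

Definition SUMM (eA cfc : nat) : fexp :=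
  EIfEq (EBit @ EPair (FEX eA cfc @ EFst @ EFst) ESnd) (EK 1)
    (EIfEq (EOrc @ ESnd) (EK 1) (HLTF (EK eA) ESnd (ESnd @ EFst)) EZero) EZero.

Definition sv (o : nat -> bool) (F eA t z : nat) : nat :=
  if bitf F z =? 1 then (if (if o z then 1 else 0) =? 1 then Hf eA z t else 0) else 0.

Definition TS (eA cfc : nat) : fexp := ESum (SUMM eA cfc) @ EPair EId (FEX eA cfc @ EFst).
Lemma den_TS o eA cfc x N t : den o (TS eA cfc) (pair (pair x N) t) =
  sumto (sv o (Of cfc (ecode eA x) N) eA t) (Of cfc (ecode eA x) N).
Proof.
  unfold TS. cbn [den]. rewrite den_Id. sp. rewrite den_FEX, den_Sum. apply sumto_ext. intro z.
  unfold SUMM, sv. dsimp. rewrite den_FEX. dsimp. reflexivity.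
Qed.

Definition ANS : fexp := EIfEq (HLTF (EFst @ EFst) (EFst @ EFst) ESnd) (EK 0) (EK 1) EZero.
Lemma den_ANS o x N t : den o ANS (pair (pair x N) t) = if Hf x x t =? 0 then 1 else 0.
Proof. unfold ANS. dsimp. destruct (_ =? 0); reflexivity. Qed.

Definition RP (eA cfc : nat) : prog := PComp (compile ANS) (PComp (MU (TS eA cfc)) (MU (TF eA cfc))).

Lemma canon_bitf F z : canon F z -> bitf F z = 1.
Proof. unfold canon, bitf. intro H. pose proof (Nat.testbit_spec' F z) as E. rewrite H in E. simpl in E. symmetry. exact E. Qed.

Lemma fuel_finite (P : nat -> Prop) c n : (forall z, z < n -> P z -> exists y, phi c z y) ->
  exists t, forall z, z < n -> P z -> Hf c z t = 0.
Proof.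
  intro H. induction n.
  - exists 0. intros; lia.
  - destruct IHn as [t1 Ht1]; [intros; apply H; auto; lia|].
    destruct (classic (P n)) as [Pn|Pn].
    + destruct (H n (Nat.lt_succ_diag_r n) Pn) as [y Hy]. destruct (Hf_complete _ _ _ Hy) as [t2 Ht2].
      exists (t1 + t2). intros z Hz Pz. assert (z < n \/ z = n) as [|] by lia.
      * apply (Hf_mono c z t1); [apply Ht1; auto|lia].
      * subst. apply Ht2. lia.
    + exists t1. intros z Hz Pz. assert (z < n \/ z = n) as [|] by lia; [apply Ht1; auto|subst; contradiction].
Qed.


Lemma phi_P2 eA x z y : phi (ecode eA x) z y -> exists s, Hf x x s = 0 /\ y = (if Hf eA z s =? 0 then 1 else 0).
Proof.
  intro H. unfold ecode in H. apply phi_spec in H. unfold P2 in H. apply comp_inv in H.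
  destruct H as [u [Hu Hy]]. apply MU_sound in Hu. destruct Hu as [s [-> [Hs _]]].
  rewrite den_T2 in Hs. apply ev_compile_det in Hy. rewrite den_OUT2 in Hy. eauto.
Qed.

Lemma P2_total eA x z : K x -> defined (ecode eA x) z.
Proof.
  intros [v Hv]. destruct (Hf_complete _ _ _ Hv) as [n Hn].
  destruct (MU_complete (fun _ => false) T2 (pair x z)) as [m [Hm _]].
  { exists n. rewrite den_T2. apply Hn. lia. }
  exists (den (fun _ => false) (OUT2 eA) (pair (pair x z) m)). unfold ecode. apply phi_spec.
  unfold P2. econstructor; [exact Hm|apply compile_correct].
Qed.

Theorem part2 (A : nat -> Prop) : DWEU A -> Treducible K A.
Proof.
  intros [[eA HeA] [fc [Hfc HDW]]]. destruct Hfc as [cfc Hcfc].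
  set (oA := fun x => if excluded_middle_informative (A x) then true else false).
  exists oA. split.
  { intro x. unfold oA. destruct (excluded_middle_informative (A x)); split; intro; auto; try discriminate; contradiction. }
  exists (encode (RP eA cfc)). intro x. unfold phiO.
  destruct (Hf_complete _ _ _ (Hcfc (ecode eA x))) as [N0 HN0].
  destruct (MU_complete oA (TF eA cfc) x) as [m1 [Hm1 Hz1]].
  { exists N0. rewrite den_TF. apply HN0. lia. }
  rewrite den_TF in Hz1.
  assert (HF : Of cfc (ecode eA x) m1 = fc (ecode eA x)).
  { eapply phi_det; [apply Hf_sound; exact Hz1|apply Hcfc]. }
  set (F := fc (ecode eA x)) in *.
  destruct (fuel_finite (fun z => bitf F z = 1 /\ A z) eA F) as [t0 Ht0].
  { intros z _ [_ Az]. apply HeA in Az. exact Az. }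
  destruct (MU_complete oA (TS eA cfc) (pair x m1)) as [m2 [Hm2 Hz2]].
  { exists t0. rewrite den_TS, HF. apply sumto_zero. intros z Hz. unfold sv.
    destruct (Nat.eqb_spec (bitf F z) 1); [|reflexivity].
    unfold oA. destruct (excluded_middle_informative (A z)); [|reflexivity]. simpl. apply Ht0; auto. }
  rewrite den_TS, HF in Hz2.
  exists (if Hf x x m2 =? 0 then 1 else 0). split.
  { exists (RP eA cfc). split; [reflexivity|]. unfold RP.
    econstructor; [econstructor; [exact Hm1|exact Hm2]|]. rewrite <- (den_ANS oA x m1 m2). apply compile_correct. }
  unfold chi. destruct (Nat.eqb_spec (Hf x x m2) 0) as [E|E].
  - left. split; auto. exists (Of x x m2). apply Hf_sound. auto.
  - right. split; auto. intro HK.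
    destruct (HDW (ecode eA x)) as [z [Hz [y [Hy Hchi]]]].
    { intros z _. apply P2_total. auto. }
    apply phi_P2 in Hy. destruct Hy as [s [Hs ->]].
    destruct (Nat.eqb_spec (Hf eA z s) 0) as [E2|E2].
    + apply Hchi. left. split; auto. apply HeA. exists (Of eA z s). apply Hf_sound. auto.
    + assert (Az : A z) by (apply NNPP; intro Hn; apply Hchi; right; auto).
      assert (Hzl : z < F) by (apply canon_lt; auto).
      assert (Hb : bitf F z = 1) by (apply canon_bitf; auto).
      rewrite sumto_zero in Hz2. specialize (Hz2 z Hzl). unfold sv in Hz2.
      assert (Ho : oA z = true) by (unfold oA; destruct (excluded_middle_informative (A z)); [reflexivity|contradiction]).
      rewrite Hb, Ho in Hz2. cbn [Nat.eqb] in Hz2.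
      destruct (le_lt_dec s m2) as [Hsm|Hsm].
      * apply E. apply (Hf_mono x x s m2 Hs Hsm).
      * apply E2. apply (Hf_mono eA z m2 s Hz2). lia.
Qed.

Theorem mainTheorem3 :
  (forall (A : nat -> Prop) (a : nat -> nat),
      DWEU A ->
      computable a ->
      (forall s t, a s = a t -> s = t) ->
      (forall x, A x <-> exists t, a t = x) ->
      effectively_simple (deficiency a))
  /\
  (forall A : nat -> Prop, DWEU A -> Treducible K A).
Proof. split; [exact part1|exact part2]. Qed.
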